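(* Let $k\geq 2$ and let $G\subseteq V_{n-3}$ be a $(2k-2)$-set with property $P_{n-3}$. Then $F=G\cup\{n-2,n-1,n\}$ is a facet of $B^{2k,k-1}_n$.
   Context: $V_n=\{\pm1,\dots,\pm n\}$; $-X$ denotes the image of $X$ under $v\mapsto -v$. For pure complexes $\Gamma\subseteq\Delta$ of the same dimension, $\Delta\setminus\Gamma$ is the subcomplex generated by the facets of $\Delta$ not facets of $\Gamma$. $\overline{W}$ is the simplex on $W$, $*$ is the join, $\Delta*v=\Delta*\overline{\{v\}}$. The complexes $\Delta^d_n$ and $B^{d,i}_n$ are defined recursively: $\Delta^1_n$ is the cycle $(1,2,\dots,n,-1,\dots,-n,1)$; $\Delta^d_{d+1}$ is the boundary complex of the $(d+1)$-cross-polytope on $V_{d+1}$; $B^{d,j}_n=\emptyset$ for $j<0$; $B^{1,0}_n=\overline{\{-1,n\}}$; for $d=2k$, $n\geq 2k$: $B^{2k-1,k}_n=\Delta^{2k-1}_n\setminus B^{2k-1,k-1}_n$; for $n\geq d+1$, $i\leq\lfloor d/2\rfloor$: $B^{d,i}_n=(B^{d-1,i}_{n-1}*n)\cup((-B^{d-1,i-1}_{n-1})*(-n))$; $\Delta^d_{n+1}$ is obtained from $\Delta^d_n$ by replacing $B^{d,\lceil d/2\rceil-1}_n$ with $\partial B^{d,\lceil d/2\rceil-1}_n*(n+1)$ and $-B^{d,\lceil d/2\rceil-1}_n$ with $\partial(-B^{d,\lceil d/2\rceil-1}_n)*(-n-1)$. A $2j$-set $G=\{p_1,\dots,p_{2j}\}\subseteq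 V_N$ has property $P_N$ if $1\leq|p_1|<\dots<|p_{2j}|\leq N$, $p_{2i-1},p_{2i}$ have the same sign for all $i$, $|p_2|-|p_1|=1$, and $|p_{2i}|-|p_{2i-1}|=2$ for $2\leq i\leq j$. *)

(* Defs.v *)
From HB Require Import structures.
From mathcomp Require Import all_boot all_order all_algebra.
From mathcomp Require Import finmap.
Set Implicit Arguments. Unset Strict Implicit. Unset Printing Implicit Defensive.
Import GRing.Theory Num.Theory.
Local Open Scope fset_scope.
Local Open Scope ring_scope.
Local Open Scope fset_scope.

(* A pure simplicial complex on vertices in Z\{0} is represented by its set of
   facets; a face/facet is a finite set of integers (vertex v <-> v, -v <-> -v). *)
Notation cplx := {fset {fset int}}.

Definition V (n : nat) : {fset int} :=
  [fset (i.+1)%:Z | i in iota 0 n] `|` [fset (- (i.+1)%:Z)%R | i in iota 0 n].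

Definition negF (X : {fset int}) : {fset int} := [fset (- v)%R | v in X].
Definition negC (D : cplx) : cplx := [fset negF F | F in D].

Definition joinv (D : cplx) (v : int) : cplx := [fset v |` F | F in D].

(* Delta \ Gamma : complex generated by the facets of Delta not facets of Gamma *)
Definition cdiff (D G : cplx) : cplx := D `\` G.

(* boundary of a pure complex (a ball): codimension-one faces lying in exactly
   one facet *)
Definition ridges (D : cplx) : cplx := [fset F `\ v | F in D, v in F].
Definition bdry (D : cplx) : cplx :=
  [fset R in ridges D | #|` [fset F in D | R `<=` F] | == 1%N].

(* Delta^1_n : the cycle (1,2,...,n,-1,...,-n,1) *)
Definition cycle1 (n : nat) : cplx :=
  [fset (i%:Z |` [fset (i.+1)%:Z]) | i in iota 1 n.-1]
  `|` [fset ((- i%:Z)%R |` [fset (- (i.+1)%:Z)%R]) | i in iota 1 n.-1]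
  `|` [fset (n%:Z |` [fset (-1)%R])]
  `|` [fset ((- n%:Z)%R |` [fset 1%R])].

(* boundary complex of the m-dimensional cross-polytope on V_m (facets) *)
Fixpoint cross (m : nat) : cplx :=
  if m is m'.+1 then joinv (cross m') m%:Z `|` joinv (cross m') (- m%:Z)%R
  else [fset fset0].

(* Delta^D_{D+1+m}, given Bd n = B^{D, ceil(D/2)-1}_n *)
Fixpoint DeltaAux (Bd : nat -> cplx) (D m : nat) : cplx :=
  if m is m'.+1 then
    let n := (D.+1 + m')%N in
    let B := Bd n in
    (((DeltaAux Bd D m' `\` B) `\` negC B)
       `|` joinv (bdry B) (n.+1)%:Z)
       `|` joinv (bdry (negC B)) (- (n.+1)%:Z)%R
  else cross D.+1.

(* a level: (n |-> Delta^d_n, n i |-> B^{d,i}_n) *)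
Definition level := ((nat -> cplx) * (nat -> nat -> cplx))%type.

Definition level1 : level :=
  (cycle1,
   fun n i => if i == 0%N then [fset ((-1)%R |` [fset n%:Z])]
              else if i == 1%N then cdiff (cycle1 n) [fset ((-1)%R |` [fset n%:Z])]
              else fset0).

(* from level D-1 to level D (D >= 2) *)
Definition step (D : nat) (L : level) : level :=
  let Bp := L.2 in
  let Blow n i :=
    joinv (Bp n.-1 i) n%:Z
    `|` (if i is i'.+1 then joinv (negC (Bp n.-1 i')) (- n%:Z)%R else fset0) in
  let Del n := DeltaAux (fun m => Blow m (uphalf D).-1) D (n - D.+1) in
  (Del, fun n i =>
          if (i <= D./2)%N then Blow n i
          else if odd D && (i == D./2.+1) then cdiff (Del n) (Blow n D./2)
          else fset0).

(* lev e = level e+1 *)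
Fixpoint lev (e : nat) : level :=
  if e is e'.+1 then step e.+1 (lev e') else level1.

Definition Delta (d n : nat) : cplx := (lev d.-1).1 n.
Definition Bcx (d i n : nat) : cplx := (lev d.-1).2 n i.

(* property P_N of a 2j-set G = {p_1,...,p_2j} (0-indexed here) *)
Definition propP (N : nat) (G : {fset int}) : Prop :=
  exists (j : nat) (p : seq int),
    size p = (2 * j)%N /\
    G = [fset x | x in p] /\
    (forall x, x \in p -> (1 <= absz x <= N)%N) /\
    sorted (fun x y => (absz x < absz y)%N) p /\
    (forall i, (i < j)%N -> (0 < nth (0:int) p (2 * i))%R = (0 < nth (0:int) p (2 * i).+1)%R) /\
    ((0 < j)%N -> absz (nth (0:int) p 1) = (absz (nth (0:int) p 0)).+1) /\
    (forall i, (1 <= i < j)%N -> absz (nth (0:int) p (2 * i).+1) = (absz (nth (0:int) p (2 * i)) + 2)%N).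

(* Main.v *)
Require Import Defs.
From mathcomp Require Import all_boot all_order all_algebra finmap.
From mathcomp Require Import zify.
Set Implicit Arguments. Unset Strict Implicit. Unset Printing Implicit Defensive.
Import GRing.Theory Num.Theory.
Local Open Scope fset_scope.
Local Open Scope ring_scope.


Lemma in_negF (X : {fset int}) w : (w \in negF X) = (- w \in X).
Proof.
apply/imfsetP/idP => [[v vX ->]|h]; first by rewrite opprK.
by exists (- w) => //; rewrite opprK.
Qed.

Lemma negFK X : negF (negF X) = X.
Proof. by apply/fsetP => w; rewrite !in_negF opprK. Qed.

Lemma card_negF X : #|` negF X| = #|` X|.
Proof. apply/eqP/card_in_imfsetP => x y _ _; exact: oppr_inj. Qed.

Lemma in_negC (D : cplx) F : (F \in negC D) = (negF F \in D).
Proof.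
apply/imfsetP/idP => [[H HD ->]|h]; first by rewrite negFK.
by exists (negF F) => //; rewrite negFK.
Qed.

Lemma in_joinv (D : cplx) v F :
  reflect (exists2 X, X \in D & F = v |` X) (F \in joinv D v).
Proof. exact: imfsetP. Qed.

Lemma mem_joinv (D : cplx) v X : X \in D -> v |` X \in joinv D v.
Proof. by move=> h; apply/in_joinv; exists X. Qed.

Lemma negFU1 v X : negF (v |` X) = (- v) |` negF X.
Proof.
apply/fsetP => w; rewrite in_negF !in_fset1U in_negF.
by rewrite (can2_eq (@opprK _) (@opprK _)).
Qed.


Definition good (s m : nat) (C : cplx) :=
  forall F, F \in C -> #|` F| = s /\ forall x, x \in F -> (absz x <= m)%N.

Lemma good_sub s m (C C' : cplx) : {subset C' <= C} -> good s m C -> good s m C'.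
Proof. by move=> h g F /h /g. Qed.

Lemma good_U s m (C1 C2 : cplx) : good s m C1 -> good s m C2 -> good s m (C1 `|` C2).
Proof. by move=> g1 g2 F; rewrite in_fsetU => /orP[/g1|/g2]. Qed.

Lemma good_le s m m' C : (m <= m')%N -> good s m C -> good s m' C.
Proof.
move=> le g F /g [-> h]; split=> // x /h; move/leq_trans; apply; exact le.
Qed.

Lemma good0 s m : good s m fset0.
Proof. by move=> F; rewrite in_fset0. Qed.

Lemma good_negC s m C : good s m C -> good s m (negC C).
Proof.
move=> g F; rewrite in_negC => /g [c h]; split; first by rewrite -card_negF.
move=> x xF; have := h (- x); rewrite in_negF opprK abszN; exact.
Qed.

Lemma good_joinv s m C v : good s m C -> absz v = m.+1 -> good s.+1 m.+1 (joinv C v).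
Proof.
move=> g hv F /in_joinv [X /g [cX bX] ->]; split.
  rewrite cardfsU1 cX; case: (boolP (v \in X)) => // /bX; rewrite hv ltnn //.
move=> x; rewrite in_fset1U => /orP[/eqP ->|/bX]; first by rewrite hv.
by move/leq_trans; apply.
Qed.

Lemma good_bdry s m C : good s.+1 m C -> good s m (bdry C).
Proof.
move=> g R; rewrite in_fsetE /= => /andP[/imfset2P [F /= FC [v /= vF ->]] _].
have [cF bF] := g F FC; split.
  by move: cF; rewrite (cardfsD1 v) vF add1n => -[].
by move=> x; rewrite in_fsetD1 => /andP[_ /bF].
Qed.


Lemma good_cross m : good m m (cross m).
Proof.
elim: m => [|m IH] /=.
  by move=> F; rewrite in_fset1 => /eqP ->; split=> // x; rewrite in_fset0.
by apply: good_U; apply: good_joinv => //; rewrite abszN.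
Qed.

Lemma good_pair (a b : int) n : a != b -> (absz a <= n)%N -> (absz b <= n)%N ->
  #|` a |` [fset b]| = 2%N /\ forall x, x \in a |` [fset b] -> (absz x <= n)%N.
Proof.
move=> ab ha hb; split; first by rewrite cardfsU1 cardfs1 in_fset1 ab.
by move=> x; rewrite in_fset1U in_fset1 => /orP[]/eqP->.
Qed.

Lemma good_cycle n : (2 <= n)%N -> good 2 n (cycle1 n).
Proof.
move=> n2 F; rewrite !in_fsetU => /orP[/orP[/orP[h|h]|h]|h].
- case/imfsetP: h => i /=; rewrite mem_iota => /andP[i1 i2] ->.
  apply: good_pair => /=; [|lia|lia].
  rewrite eqz_nat; lia.
- case/imfsetP: h => i /=; rewrite mem_iota => /andP[i1 i2] ->.
  apply: good_pair => /=; rewrite ?abszN /=; [|lia|lia].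
  rewrite eqr_opp eqz_nat; lia.
- by move: h; rewrite in_fset1 => /eqP ->; apply: good_pair => //; lia.
- move: h; rewrite in_fset1 => /eqP ->; apply: good_pair; rewrite ?abszN //.
  rewrite -[1]opprK eqr_opp; lia.
  by case: n n2.
Qed.


Definition Blow' (Bp : nat -> nat -> cplx) (n i : nat) : cplx :=
  joinv (Bp n.-1 i) n%:Z `|`
  (if i is i'.+1 then joinv (negC (Bp n.-1 i')) (- n%:Z)%R else fset0).

Lemma step2E D (L : level) n i : (step D L).2 n i =
  if (i <= D./2)%N then Blow' L.2 n i
  else if odd D && (i == D./2.+1) then
    cdiff (DeltaAux (fun m => Blow' L.2 m (uphalf D).-1) D (n - D.+1)) (Blow' L.2 n D./2)
  else fset0.
Proof. by []. Qed.

Lemma step1E D (L : level) n : (step D L).1 n =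
  DeltaAux (fun m => Blow' L.2 m (uphalf D).-1) D (n - D.+1).
Proof. by []. Qed.

Definition Inv e := forall n, (e.+2 <= n)%N ->
  good e.+2 n ((lev e).1 n) /\ forall i, good e.+2 n ((lev e).2 n i).

Lemma good_DA Bd D : (forall n, (D.+1 <= n)%N -> good D.+1 n (Bd n)) ->
  forall m, good D.+1 (D.+1 + m) (DeltaAux Bd D m).
Proof.
move=> hB; elim=> [|m IH] /=; first by rewrite addn0; apply: good_cross.
have hBm := hB (D.+1 + m)%N (leq_addr _ _).
rewrite addnS; apply: good_U; first apply: good_U.
- apply: good_le (leqnSn _) _; apply: good_sub IH => F.
  by rewrite /= !in_fsetD => /andP[_ /andP[_ ->]].
- apply: good_joinv => //; exact: good_bdry.
- apply: good_joinv; last by rewrite abszN.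
  by apply: good_bdry; apply: good_negC.
Qed.

Lemma Inv0 : Inv 0.
Proof.
move=> n n2; split; first exact: good_cycle.
case=> [|[|i]] /=.
- move=> F; rewrite in_fset1 => /eqP ->; apply: good_pair => //; lia.
- apply: good_sub (good_cycle n2) => F; rewrite /cdiff in_fsetD.
  by case/andP.
- exact: good0.
Qed.

Lemma InvS e : Inv e -> Inv e.+1.
Proof.
move=> IH.
have hBl : forall n i, (e.+3 <= n)%N -> good e.+3 n (Blow' (lev e).2 n i).
  move=> [|n] // i hn; have [_ g] := IH n hn.
  apply: good_U; first by apply: good_joinv.
  case: i => [|i]; first exact: good0.
  by apply: good_joinv; [apply: good_negC | rewrite abszN].
have hDA : forall n, (e.+3 <= n)%N -> good e.+3 n ((lev e.+1).1 n).
  move=> n hn; rewrite step1E.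
  have := @good_DA (fun m => Blow' (lev e).2 m (uphalf e.+2).-1) e.+2.
  move=> /(_ (fun m hm => hBl m _ hm) (n - e.+3)%N); rewrite subnKC //.
move=> n hn; split; first exact: hDA.
move=> i; have -> : lev e.+1 = step e.+2 (lev e) by [].
rewrite step2E.
case: ifP => _; first exact: hBl.
case: ifP => _; last exact: good0.
apply: good_sub (hDA n hn) => F; rewrite /cdiff in_fsetD => /andP[_].
by rewrite step1E.
Qed.

Lemma InvAll e : Inv e.
Proof. elim: e => [|e IH]; [exact: Inv0 | exact: InvS]. Qed.

Lemma good_Bcx D i n : (1 <= D)%N -> (D.+1 <= n)%N -> good D.+1 n (Bcx D i n).
Proof. by case: D => // D _ hn; have [_ h] := InvAll hn; apply: h. Qed.

Lemma good_Delta D n : (1 <= D)%N -> (D.+1 <= n)%N -> good D.+1 n (Delta D n).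
Proof. by case: D => // D _ hn; have [h _] := InvAll hn; apply: h. Qed.


Lemma BcxS D i n : (2 <= D)%N -> (i <= D./2)%N ->
  Bcx D i n.+1 = joinv (Bcx D.-1 i n) n.+1%:Z `|`
    (if i is i'.+1 then joinv (negC (Bcx D.-1 i' n)) (- n.+1%:Z)%R else fset0).
Proof.
case: D => [|[|e]] // _ hi.
have -> : Bcx e.+2 i n.+1 = (step e.+2 (lev e)).2 n.+1 i by [].
by rewrite step2E hi.
Qed.

Lemma half_odd j : ((2 * j).+1./2 = j)%N.
Proof. by rewrite mul2n -add1n (half_bit_double j true). Qed.

Lemma uphalf_odd j : (uphalf (2 * j).+1 = j.+1)%N.
Proof. by rewrite /= mul2n doubleK. Qed.

Lemma odd_odd j : odd (2 * j).+1.
Proof. by rewrite /= mul2n odd_double. Qed.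

Lemma Bcx_top j n :
  Bcx (2 * j).+1 j.+1 n = Delta (2 * j).+1 n `\` Bcx (2 * j).+1 j n.
Proof.
case: j => [|j] //.
have -> : (2 * j.+1).+1 = (2 * j).+1.+2 by rewrite mulnS.
have -> : Bcx (2 * j).+1.+2 j.+2 n = (step (2 * j).+1.+2 (lev (2 * j).+1)).2 n j.+2 by [].
have -> : Bcx (2 * j).+1.+2 j.+1 n = (step (2 * j).+1.+2 (lev (2 * j).+1)).2 n j.+1 by [].
have -> : Delta (2 * j).+1.+2 n = (step (2 * j).+1.+2 (lev (2 * j).+1)).1 n by [].
have h2 : ((2 * j).+1.+2./2 = j.+1)%N by rewrite -(half_odd j.+1) mulnS.
have ho : odd (2 * j).+1.+2 by have := odd_odd j.+1; rewrite mulnS.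
by rewrite !step2E h2 ltnn leqnn ho eqxx.
Qed.

Lemma DeltaAuxS Bd D k : DeltaAux Bd D k.+1 =
  ((DeltaAux Bd D k `\` Bd (D.+1 + k)%N) `\` negC (Bd (D.+1 + k)%N))
       `|` joinv (bdry (Bd (D.+1 + k)%N)) (D.+1 + k).+1%:Z
       `|` joinv (bdry (negC (Bd (D.+1 + k)%N))) (- (D.+1 + k).+1%:Z)%R.
Proof. by []. Qed.

Lemma DeltaS j m : (1 <= j)%N -> ((2 * j).+2 <= m)%N ->
  Delta (2 * j).+1 m.+1 =
    ((Delta (2 * j).+1 m `\` Bcx (2 * j).+1 j m) `\` negC (Bcx (2 * j).+1 j m))
    `|` joinv (bdry (Bcx (2 * j).+1 j m)) m.+1%:Z
    `|` joinv (bdry (negC (Bcx (2 * j).+1 j m))) (- m.+1%:Z)%R.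
Proof.
case: j => [|j] // _ hm.
have E : (2 * j.+1).+1 = (2 * j).+1.+2 by rewrite mulnS.
rewrite E in hm *.
have -> : Bcx (2 * j).+1.+2 j.+1 m = (step (2 * j).+1.+2 (lev (2 * j).+1)).2 m j.+1 by [].
have -> : Delta (2 * j).+1.+2 m = (step (2 * j).+1.+2 (lev (2 * j).+1)).1 m by [].
have -> : Delta (2 * j).+1.+2 m.+1 = (step (2 * j).+1.+2 (lev (2 * j).+1)).1 m.+1 by [].
have h2 : ((2 * j).+1.+2./2 = j.+1)%N by rewrite -(half_odd j.+1) mulnS.
have hu : (uphalf (2 * j).+1.+2 = j.+2)%N.
  by rewrite -(uphalf_odd j.+1) mulnS.
rewrite !step1E step2E h2 leqnn hu (subSn hm) DeltaAuxS (subnKC hm).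
reflexivity.
Qed.


Definition hasabs (F : {fset int}) (m : nat) := exists2 w, w \in F & absz w = m.

Lemma hasabs_negF F m : hasabs (negF F) m -> hasabs F m.
Proof. by case=> w; rewrite in_negF => h <-; exists (- w) => //; rewrite abszN. Qed.

Lemma hasabs_sub F F' m : F `<=` F' -> hasabs F m -> hasabs F' m.
Proof. by move=> /fsubsetP s [w /s h <-]; exists w. Qed.

Lemma L1 D i m F : (2 <= D)%N -> (i <= D./2)%N -> F \in Bcx D i m.+1 -> hasabs F m.+1.
Proof.
move=> hD hi; rewrite BcxS // in_fsetU => /orP[|].
  by case/in_joinv=> X _ ->; exists m.+1%:Z => //; rewrite fset1U1.
case: i hi => [|i] hi; first by rewrite in_fset0.
by case/in_joinv=> X _ ->; exists (- m.+1%:Z) => //; rewrite ?fset1U1 ?abszN.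
Qed.

Lemma L2 D i m F : (3 <= D)%N -> (i <= D.-1./2)%N -> F \in Bcx D i m.+2 -> hasabs F m.+1.
Proof.
move=> hD hi.
have hi' : (i <= D./2)%N by apply: leq_trans hi _; apply: half_leq; apply: leq_pred.
have hD' : (2 <= D.-1)%N by case: D hD {hi hi'} => [|[|[|D]]].
rewrite BcxS ?(leq_trans _ hD) // in_fsetU => /orP[|].
  case/in_joinv=> X hX ->; apply: hasabs_sub (fsubsetU1 _ _) _.
  exact: (L1 hD' hi hX).
case: i hi {hi'} => [|i] hi; first by rewrite in_fset0.
case/in_joinv=> X; rewrite in_negC => hX ->; apply: hasabs_sub (fsubsetU1 _ _) _.
apply: hasabs_negF; apply: (L1 hD' _ hX); exact: leq_trans (leqnSn _) hi.
Qed.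

Lemma L1C D i m F : (2 <= D)%N -> (i <= D./2)%N -> F \in negC (Bcx D i m.+1) -> hasabs F m.+1.
Proof.
move=> hD hi; rewrite in_negC => /(L1 hD hi) h.
exact: hasabs_negF h.
Qed.

Lemma L2C D i m F : (3 <= D)%N -> (i <= D.-1./2)%N -> F \in negC (Bcx D i m.+2) -> hasabs F m.+1.
Proof.
move=> hD hi; rewrite in_negC => /(L2 hD hi) h.
exact: hasabs_negF h.
Qed.


Lemma subset_card_eq (X Y : {fset int}) : X `<=` Y -> #|` X| = #|` Y| -> X = Y.
Proof.
move=> s c; apply/eqP; rewrite -(fsubset_leqif_cards s).2 c //.
Qed.

Lemma in_bdry (C : cplx) R :
  (R \in bdry C) = (R \in ridges C) && (#|` [fset F in C | R `<=` F]| == 1%N).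
Proof. by rewrite /bdry in_fset /=. Qed.

Lemma in_bdryI (C : cplx) R v : v |` R \in C -> v \notin R ->
  (forall H, H \in C -> R `<=` H -> H = v |` R) -> R \in bdry C.
Proof.
move=> hC hv hu; rewrite in_bdry; apply/andP; split.
  have -> : R = (v |` R) `\ v by rewrite fsetU1K.
  by apply/imfset2P; exists (v |` R) => //; exists v => //; rewrite fset1U1.
have -> : [fset F in C | R `<=` F] = [fset v |` R].
  apply/fsetP=> H; rewrite in_fset1 in_fset /=; apply/andP/eqP.
    by case=> h1 h2; apply: hu.
  by move=> ->; split=> //; apply: fsubsetU1.
by rewrite cardfs1.
Qed.

Lemma negF_sub X Y : negF X `<=` Y -> X `<=` negF Y.
Proof.
move=> /fsubsetP s; apply/fsubsetP=> w wX; rewrite in_negF; apply: s.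
by rewrite in_negF opprK.
Qed.


Lemma notB J a m Q : (1 <= J)%N -> (a.+2 <= m)%N ->
  ~ hasabs Q a.+1 -> (forall w, w \in Q -> (absz w <= a.+2)%N) ->
  Q \notin Bcx (2 * J).+1 J m /\ Q \notin negC (Bcx (2 * J).+1 J m).
Proof.
move=> hJ hm hQ hb.
have hD3 : (3 <= (2 * J).+1)%N by lia.
have hi2 : (J <= (2 * J).+1.-1./2)%N by rewrite /= mul2n doubleK.
have hi1 : (J <= (2 * J).+1./2)%N by rewrite half_odd.
have hD2 : (2 <= (2 * J).+1)%N by lia.
have big : forall m', (a.+2 < m'.+1)%N -> ~ hasabs Q m'.+1.
  by move=> m' hm' [w /hb wQ hw]; move: wQ; rewrite hw; lia.
case: (ltngtP a.+2 m) hm => // [hlt|<-] _.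
  case: m hlt => // m hlt; split; apply/negP.
    by move/(L1 hD2 hi1); apply: big.
  by move/(L1C hD2 hi1); apply: big.
by split; apply/negP; [move/(L2 hD3 hi2) | move/(L2C hD3 hi2)].
Qed.

Lemma survive J a Q : (1 <= J)%N -> ((2 * J).+2 <= a.+2)%N ->
  Q \in Delta (2 * J).+1 a.+2 ->
  ~ hasabs Q a.+1 -> (forall w, w \in Q -> (absz w <= a.+2)%N) ->
  forall N, (a.+2 <= N)%N -> Q \in Bcx (2 * J).+1 J.+1 N.
Proof.
move=> hJ ha hQ hn hb N hN.
have hk : forall k, Q \in Delta (2 * J).+1 (a.+2 + k).
  elim=> [|k IH]; first by rewrite addn0.
  rewrite addnS DeltaS //; last by apply: leq_trans ha (leq_addr _ _).
  have [n1 n2] := notB (m := (a.+2 + k)%N) hJ (leq_addr _ _) hn hb.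
  by rewrite !in_fsetU !in_fsetD n1 n2 IH.
rewrite Bcx_top in_fsetD.
have [n1 _] := notB hJ hN hn hb; rewrite n1 /=.
by have := hk (N - a.+2)%N; rewrite subnKC.
Qed.


Lemma sub_U1 (v : int) R X : v \notin R -> R `<=` v |` X -> R `<=` X.
Proof.
move=> hv /fsubsetP s; apply/fsubsetP=> w wR; have := s w wR.
rewrite in_fset1U => /orP[/eqP e|//]; by move: hv; rewrite -e wR.
Qed.

Lemma core J b T : (1 <= J)%N -> ((2 * J) <= b)%N ->
  T \in Bcx (2 * J).-1 J b ->
  (forall w, w \in T -> (absz w <= b)%N) ->
  #|` T| = (2 * J)%N ->
  ((2 <= J)%N -> ~ (hasabs T b /\ hasabs T b.-1)) ->
  forall N, (b.+3 <= N)%N ->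
  (b.+3%:Z |` (b.+1%:Z |` T)) \in Bcx (2 * J).+1 J.+1 N /\
  negF (b.+3%:Z |` (b.+1%:Z |` T)) \in Bcx (2 * J).+1 J.+1 N.
Proof.
move=> hJ hb hT bT cT gap N hN.
set R := b.+1%:Z |` T.
have s1 : R \in Bcx (2 * J) J b.+1.
  rewrite BcxS; [|lia|by rewrite mul2n doubleK].
  by rewrite in_fsetU mem_joinv.
have s2 : b.+2%:Z |` R \in Bcx (2 * J).+1 J b.+2.
  rewrite BcxS; [|lia|by rewrite half_odd].
  by rewrite in_fsetU mem_joinv.
have nT : forall w, w \in T -> (absz w == b.+1)%N = false.
  by move=> w /bT; lia.
have cR : #|` R| = (2 * J).+1.
  rewrite /R cardfsU1 cT; case: (boolP (b.+1%:Z \in T)) => // /nT.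
  by rewrite eqxx.
have bR : forall w, w \in R -> (absz w <= b.+1)%N.
  move=> w; rewrite in_fset1U => /orP[/eqP ->//|/bT]; lia.
have nR : b.+2%:Z \notin R by apply/negP => /bR /=; lia.
have nR' : (- b.+2%:Z) \notin R by apply/negP => /bR; rewrite abszN /=; lia.
have gB := @good_Bcx (2 * J) J b.+1 ltac:(lia) ltac:(lia).
have s3 : forall H, H \in Bcx (2 * J).+1 J b.+2 -> R `<=` H -> H = b.+2%:Z |` R.
  move=> H; rewrite BcxS; [|lia|by rewrite half_odd].
  rewrite in_fsetU => /orP[].
    case/in_joinv=> X hX -> sub; congr (_ |` _); symmetry.
    apply: subset_card_eq; first exact: sub_U1 nR sub.
    by rewrite cR; have [-> _] := gB X hX.
  case: J hJ hb hT cT gap gB s1 s2 cR {nT} => // J' _ hb hT cT gap gB s1 s2 cR.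
  case/in_joinv=> X hX -> sub; exfalso.
  have eX : R = X.
    apply: subset_card_eq; first exact: sub_U1 nR' sub.
    by rewrite cR; have [-> _] := good_negC (@good_Bcx (2 * J'.+1) J' b.+1 ltac:(lia) ltac:(lia)) hX.
  move: hX; rewrite -eX in_negC.
  rewrite (BcxS (D := (2 * J'.+1)%N)); [|lia|rewrite mul2n doubleK; lia].
  rewrite in_fsetU => /orP[].
    case/in_joinv=> Y _ e.
    have : b.+1%:Z \in negF R by rewrite e fset1U1.
    rewrite in_negF in_fset1U => /orP[/eqP|]; first lia.
    by move=> /bT; rewrite abszN; lia.
  case: J' hb hT cT gap gB s1 s2 cR => [|J''] hb hT cT gap gB s1 s2 cR.
    by rewrite in_fset0.
  case/in_joinv=> Y hY e.
  have sY : Y `<=` negF R by rewrite e fsubsetU1.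
  have e1 : ((2 * J''.+2).-1 = (2 * J''.+1).+1)%N by lia.
  have e2 : ((2 * J''.+2).-1.-1 = (J''.+1).*2)%N by rewrite -mul2n; lia.
  have h1 := L1C (i := J'') (m := b.-1) (D := (2 * J''.+2).-1) ltac:(lia) ltac:(rewrite e1 half_odd; lia).
  have h2 := L2C (i := J'') (m := b.-2) (D := (2 * J''.+2).-1) ltac:(lia) ltac:(rewrite e2 doubleK; lia).
  have hb1 : b.-1.+1 = b by lia.
  have hb2 : b.-2.+2 = b by lia.
  have hb3 : b.-2.+1 = b.-1 by lia.
  rewrite hb1 in h1; rewrite hb2 hb3 in h2.
  have A1 := hasabs_negF (hasabs_sub sY (h1 _ hY)).
  have A2 := hasabs_negF (hasabs_sub sY (h2 _ hY)).
  apply: (gap isT); split.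
    case: A1 => w; rewrite in_fset1U => /orP[/eqP -> /=|wT hw]; first lia.
    by exists w.
  case: A2 => w; rewrite in_fset1U => /orP[/eqP -> /=|wT hw]; first lia.
  by exists w.
have s5 : R \in bdry (Bcx (2 * J).+1 J b.+2) by apply: (in_bdryI s2 nR s3).
have s5' : negF R \in bdry (negC (Bcx (2 * J).+1 J b.+2)).
  apply: (in_bdryI (v := - b.+2%:Z)).
  - by rewrite -negFU1 in_negC negFK.
  - by rewrite in_negF opprK.
  move=> H; rewrite in_negC => hH /negF_sub sub.
  by rewrite -negFU1 -(s3 _ hH sub) negFK.
have hD : forall Q, Q \in Delta (2 * J).+1 b.+3 -> ~ hasabs Q b.+2 ->
   (forall w, w \in Q -> (absz w <= b.+3)%N) -> Q \in Bcx (2 * J).+1 J.+1 N.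
  move=> Q hQ h1 h2; apply: (survive (a := b.+1)) => //; lia.
have hP : ~ hasabs (b.+3%:Z |` R) b.+2.
  case=> w; rewrite in_fset1U => /orP[/eqP -> /=|/bR]; lia.
have bP : forall w, w \in b.+3%:Z |` R -> (absz w <= b.+3)%N.
  move=> w; rewrite in_fset1U => /orP[/eqP -> //|/bR]; lia.
split.
  apply: hD => //.
  rewrite DeltaS; [|lia|lia].
  rewrite in_fsetU; apply/orP; left; rewrite in_fsetU; apply/orP; right; exact: mem_joinv.
apply: hD.
- rewrite DeltaS; [|lia|lia].
  rewrite negFU1 in_fsetU; apply/orP; right; exact: mem_joinv.
- by move/hasabs_negF.
- by move=> w; rewrite in_negF => /bP; rewrite abszN.
Qed.


Definition ltabs := fun x y : int => (absz x < absz y)%N.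

Definition Pcond (j : nat) (p : seq int) :=
    size p = (2 * j)%N /\
    (forall x, x \in p -> (1 <= absz x)%N) /\
    sorted ltabs p /\
    (forall i, (i < j)%N -> (0 < nth (0:int) p (2 * i))%R = (0 < nth (0:int) p (2 * i).+1)%R) /\
    ((0 < j)%N -> absz (nth (0:int) p 1) = (absz (nth (0:int) p 0)).+1) /\
    (forall i, (1 <= i < j)%N -> absz (nth (0:int) p (2 * i).+1) = (absz (nth (0:int) p (2 * i)) + 2)%N).

Lemma ltabs_trans : transitive ltabs.
Proof. by move=> y x z; rewrite /ltabs; apply: ltn_trans. Qed.

Lemma sorted_nth p i k : sorted ltabs p -> (i < k)%N -> (k < size p)%N ->
  (absz (nth (0:int) p i) < absz (nth (0:int) p k))%N.
Proof.
move=> s ik kp; apply: (sorted_ltn_nth ltabs_trans (0:int) s) => //.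
by rewrite inE; apply: ltn_trans ik kp.
Qed.

Lemma abs_nth_ge p i : sorted ltabs p -> (forall x, x \in p -> (1 <= absz x)%N) ->
  (i < size p)%N -> (i.+1 <= absz (nth (0:int) p i))%N.
Proof.
move=> s h; elim: i => [|i IH] hi; first by apply: h; apply: mem_nth.
have := sorted_nth s (ltnSn i) hi; have := IH (ltnW hi); lia.
Qed.

Lemma fseq_mem (s : seq int) w : (w \in [fset z | z in s]) = (w \in s).
Proof. by rewrite in_fset. Qed.

Lemma card_fseq_uniq (s : seq int) : uniq s -> #|` [fset z | z in s]| = size s.
Proof. by move=> u; rewrite card_fseq undup_id. Qed.

Lemma Pcond_uniq j p : Pcond j p -> uniq p.
Proof.
case=> _ [_ [s _]]; apply: sorted_uniq s; first exact: ltabs_trans.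
by move=> x; rewrite /ltabs ltnn.
Qed.

Lemma Pcond_neg j p : Pcond j p -> Pcond j (map (fun x => - x) p).
Proof.
case=> sz [h1 [s [sg [f g]]]]; split; first by rewrite size_map.
split.
  by move=> x /mapP [y /h1 hy ->]; rewrite abszN.
split.
  by rewrite sorted_map; apply: sub_sorted s => x y; rewrite /ltabs /= !abszN.
have nthN : forall i, (i < size p)%N -> nth (0:int) (map (fun x => - x) p) i = - nth (0:int) p i.
  by move=> i hi; rewrite (nth_map (0:int)).
split.
  move=> i hi; rewrite !nthN ?sz; [|lia|lia].
  have hA : (2 * i < size p)%N by rewrite sz; lia.
  have hB : ((2 * i).+1 < size p)%N by rewrite sz; lia.
  have := h1 _ (mem_nth (0:int) hA); have := h1 _ (mem_nth (0:int) hB).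
  have := sg i hi; rewrite !absz_gt0; move: (nth _ p (2 * i)) (nth _ p (2 * i).+1) => a b e ha hb; lia.
split.
  by move=> hj; rewrite !nthN ?sz ?abszN; [apply: f | lia | lia].
by move=> i hi; rewrite !nthN ?sz ?abszN; [apply: g | lia | lia].
Qed.


Lemma split_last2 (s : seq int) n : size s = n.+2 ->
  s = take n s ++ [:: nth 0 s n; nth 0 s n.+1].
Proof.
move=> sz; rewrite -{1}(cat_take_drop n s); congr (_ ++ _).
have := size_drop n s; rewrite sz.
have -> : (n.+2 - n = 2)%N by lia.
have e0 := nth_drop n (0:int) s 0; have e1 := nth_drop n (0:int) s 1.
rewrite addn0 in e0; rewrite addn1 in e1; rewrite -e0 -e1.
by case: (drop n s) => [|u [|v [|w t]]].
Qed.

Lemma Pcond_take j p : Pcond j.+1 p -> Pcond j (take (2 * j) p).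
Proof.
case=> sz [h1 [s [sg [f g]]]].
have nT : forall i, (i < 2 * j)%N -> nth (0:int) (take (2 * j) p) i = nth (0:int) p i.
  by move=> i hi; rewrite nth_take.
split; first by rewrite size_takel // sz; lia.
split; first by move=> x /mem_take; apply: h1.
split; first exact: take_sorted.
split.
  by move=> i hi; rewrite !nT; [apply: sg; lia|lia|lia].
split.
  by move=> hj; rewrite !nT; [apply: f|lia|lia].
by move=> i hi; rewrite !nT; [apply: g; lia|lia|lia].
Qed.

Lemma mem_nth_idx (s : seq int) z : z \in s -> exists2 i, (i < size s)%N & z = nth 0 s i.
Proof. by move=> zs; exists (index z s); [rewrite index_mem | rewrite nth_index]. Qed.

Lemma abs_cases J q z : Pcond J.+2 q -> z \in q ->
  let c := absz (nth 0 q (2 * J.+1)) in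
  [\/ (absz z < c)%N, absz z = c | absz z = (c + 2)%N].
Proof.
move=> [sz [h1 [s [sg [f g]]]]] /mem_nth_idx [i hi ->] c.
have gg := g J.+1 ltac:(lia).
have : (i < 2 * J.+1)%N \/ i = (2 * J.+1)%N \/ i = (2 * J.+1).+1 by rewrite sz in hi; lia.
case=> [lt|[->|->]]; [apply: Or31|apply: Or32|apply: Or33] => //.
by apply: sorted_nth => //; rewrite sz; lia.
Qed.


Lemma claimA0 p : Pcond 1 p -> forall N, (forall x, x \in p -> (absz x <= N)%N) ->
  [fset z | z in p] \in Bcx 1 1 N.
Proof.
case=> sz [h1 [s [sg [f g]]]] N hN.
case: p sz h1 s sg f g hN => [|x [|y [|]]] // _ h1 _ sg f _ hN.
have sxy : (0 < x) = (0 < y) := sg 0%N isT; have fxy : absz y = (absz x).+1 := f isT.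
have hx := h1 x (mem_head _ _); have hy := hN y ltac:(by rewrite !inE eqxx orbT).
rewrite (Bcx_top 0 N) in_fsetD.
change (Delta 1 N) with (cycle1 N).
change (Bcx 1 0 N) with [fset ((-1)%R |` [fset N%:Z])].
have N2 : (2 <= N)%N by lia.
rewrite in_fset1; apply/andP; split.
  apply/negP => /eqP E.
  have e1 : -1 \in [fset z | z in [:: x; y]] by rewrite E !inE eqxx.
  have e2 : N%:Z \in [fset z | z in [:: x; y]] by rewrite E !inE eqxx orbT.
  rewrite !fseq_mem !inE in e1 e2.
  case/orP: e1 => /eqP e1; case/orP: e2 => /eqP e2 //; move: sxy N2; clear -e1 e2;
    move=> sxy N2; lia.
rewrite !in_fsetU; apply/orP; left; apply/orP; left.
have [xp|xn] : 0 < x \/ x < 0 by move: hx; clear; lia.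
  apply/orP; left; apply/imfsetP; exists (absz x).
    rewrite /= mem_iota; move: hx hy fxy; clear; lia.
  apply/fsetP=> w; rewrite fseq_mem !inE; congr (_ || _).
    by congr (_ == _); move: xp; clear; lia.
  congr (_ == _); move: xp sxy fxy; clear; lia.
apply/orP; right; apply/imfsetP; exists (absz x).
  rewrite /= mem_iota; move: hx hy fxy; clear; lia.
apply/fsetP=> w; rewrite fseq_mem !inE; congr (_ || _).
  by congr (_ == _); move: xn; clear; lia.
congr (_ == _); move: xn sxy fxy; clear; lia.
Qed.


Lemma hasabs_fseq (s : seq int) m : hasabs [fset z | z in s] m -> exists2 z, z \in s & absz z = m.
Proof. by case=> w; rewrite fseq_mem => ws <-; exists w. Qed.

Lemma hasabs_fseqN (s : seq int) m :
  hasabs [fset z | z in map (fun x => - x) s] m -> exists2 z, z \in s & absz z = m.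
Proof.
case=> w; rewrite fseq_mem => /mapP [z zs ->] <-; exists z => //; by rewrite abszN.
Qed.

Lemma gap_lemma J q b : (2 <= J)%N -> Pcond J q -> (forall z, z \in q -> (absz z <= b)%N) ->
  ~ ((exists2 z1, z1 \in q & absz z1 = b) /\ (exists2 z2, z2 \in q & absz z2 = b.-1)).
Proof.
case: J => [|[|J]] // _ hq bq [[z1 z1q e1] [z2 z2q e2]].
have [sz [h1 [s [sg [f g]]]]] := hq.
have gg := g J.+1 ltac:(lia).
have yq : nth 0 q (2 * J.+1).+1 \in q by apply: mem_nth; rewrite sz; lia.
have := bq _ yq; rewrite gg.
have := abs_cases hq z1q; have := abs_cases hq z2q; rewrite /= e1 e2.
move: (absz (nth 0 q (2 * J.+1))) => c.
case=> [?|?|?]; case=> [?|?|?]; lia.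
Qed.

Lemma claimA j : forall p, Pcond j.+1 p -> forall N, (forall x, x \in p -> (absz x <= N)%N) ->
  [fset z | z in p] \in Bcx (2 * j).+1 j.+1 N.
Proof.
elim: j => [|j IH]; first exact: claimA0.
move=> p hp N hN.
have hp' := Pcond_take hp.
have [sz [h1 [s [sg [f g]]]]] := hp.
set p' := take (2 * j.+1) p in hp'.
set x := nth 0 p (2 * j.+1); set y := nth 0 p (2 * j.+1).+1.
have ep : p = p' ++ [:: x; y] by apply: split_last2; rewrite sz; lia.
have sxy : (0 < x) = (0 < y) := sg j.+1 ltac:(lia).
have gxy : absz y = (absz x + 2)%N := g j.+1 ltac:(lia).
have xge : ((2 * j.+1).+1 <= absz x)%N by apply: abs_nth_ge => //; rewrite sz; lia.
have yN : (absz y <= N)%N by apply: hN; rewrite ep mem_cat !inE eqxx !orbT.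
have lt' : forall z, z \in p' -> (absz z < absz x)%N.
  move=> z /mem_nth_idx [i hi ->]; rewrite /p' nth_take; last first.
    by move: hi; rewrite size_takel ?sz; lia.
  by apply: sorted_nth => //; [move: hi; rewrite size_takel ?sz; lia | rewrite sz; lia].
set b := (absz x).-1.
have xb : absz x = b.+1 by rewrite /b; lia.
have yb : absz y = b.+3 by rewrite gxy xb; lia.
have hb : (2 * j.+1 <= b)%N by lia.
have bnd : forall z, z \in p' -> (absz z <= b)%N by move=> z /lt'; lia.
have sz' : size p' = (2 * j.+1)%N by case: hp'.
have gapP : forall T, (forall m, hasabs T m -> exists2 z, z \in p' & absz z = m) ->
    (2 <= j.+1)%N -> ~ (hasabs T b /\ hasabs T b.-1).
  move=> T hT hj [/hT A1 /hT A2].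
  by apply: (gap_lemma hj hp' bnd).
have hN3 : (b.+3 <= N)%N by rewrite -yb.
have [xp|xn] : 0 < x \/ x < 0 by have := h1 x ltac:(by rewrite ep mem_cat !inE eqxx orbT); lia.
- have e2 : (2 * j.+1).-1 = (2 * j).+1 by lia.
  have IH1 : [fset z | z in p'] \in Bcx (2 * j.+1).-1 j.+1 b.
    by rewrite e2; exact: IH p' hp' b bnd.
  have cT : #|` [fset z | z in p']| = (2 * j.+1)%N.
    by rewrite card_fseq_uniq ?sz' //; apply: Pcond_uniq hp'.
  have bT : forall w, w \in [fset z | z in p'] -> (absz w <= b)%N.
    by move=> w; rewrite fseq_mem => /bnd.
  have [c1 _] := core (isT : (1 <= j.+1)%N) hb IH1 bT cT (gapP _ (@hasabs_fseq p')) hN3.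
  suff -> : [fset z | z in p] = b.+3%:Z |` (b.+1%:Z |` [fset z | z in p']) by [].
  have ex : x = b.+1%:Z by lia.
  have ey : y = b.+3%:Z by lia.
  apply/fsetP => w; rewrite fseq_mem ep mem_cat !inE ?fseq_mem ex ey.
  by case: (w \in p') (w == b.+1%:Z) (w == b.+3%:Z) => [] [] [].
have pN := Pcond_neg hp'.
set q := map (fun x => - x) p' in pN.
have bndq : forall z, z \in q -> (absz z <= b)%N.
  by move=> z /mapP [z' /bnd h ->]; rewrite abszN.
have e2 : (2 * j.+1).-1 = (2 * j).+1 by lia.
have IH1 : [fset z | z in q] \in Bcx (2 * j.+1).-1 j.+1 b.
  by rewrite e2; exact: IH q pN b bndq.
have cT : #|` [fset z | z in q]| = (2 * j.+1)%N.
  by rewrite card_fseq_uniq ?size_map ?sz' //; apply: Pcond_uniq pN.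
have bT : forall w, w \in [fset z | z in q] -> (absz w <= b)%N.
  by move=> w; rewrite fseq_mem => /bndq.
have [_ c2] := core (isT : (1 <= j.+1)%N) hb IH1 bT cT (gapP _ (@hasabs_fseqN p')) hN3.
suff -> : [fset z | z in p] = negF (b.+3%:Z |` (b.+1%:Z |` [fset z | z in q])) by [].
have ex : x = - b.+1%:Z by lia.
have ey : y = - b.+3%:Z by lia.
apply/fsetP => w; rewrite fseq_mem ep mem_cat !inE in_negF !inE ?fseq_mem ex ey.
rewrite /q (mem_map oppr_inj) !eqr_oppLR.
by case: (w \in p') (w == - b.+1%:Z) (w == - b.+3%:Z) => [] [] [].
Qed.

Unset Implicit Arguments.
Local Open Scope fset_scope.
Theorem mainTheorem7 (k n : nat) (G : {fset int}) :
  (2 <= k)%N -> G `<=` V (n - 3) -> #|` G| = (2 * k - 2)%N -> propP (n - 3) G ->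
  G `|` [fset (n - 2)%:Z; (n - 1)%:Z; n%:Z] \in Bcx (2 * k) (k - 1) n.
Proof.
move=> hk _ cG [j [p [sz [eG [hb [s [sg [f g]]]]]]]].
have hp : Pcond j p.
  split=> //; split; first by move=> x /hb /andP[].
  by split.
have up := Pcond_uniq hp.
have ej : j = k.-1 by move: cG; rewrite eG card_fseq_uniq // sz; lia.
case: k hk ej cG => [|[|k0]] // _ ej cG.
subst j.
have hbN : forall x, x \in p -> (absz x <= n - 3)%N by move=> x /hb /andP[].
have A := claimA hp hbN; rewrite -eG in A.
have n3 : (1 <= n - 3)%N.
  have : (0 < size p)%N by rewrite sz; lia.
  case: p sz eG hb s sg f g hp up hbN A => // x p' _ _ hb' _ _ _ _ _ _ _ _ _.
  by have := hb' x (mem_head _ _); lia.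
set m := (n - 3)%N in A n3.
have en : n = m.+3 by rewrite /m; lia.
have A1 : m.+1%:Z |` G \in Bcx (2 * k0).+2 k0.+1 m.+1.
  rewrite BcxS //; last by rewrite /= mul2n doubleK.
  by rewrite in_fsetU mem_joinv.
have A2 : m.+2%:Z |` (m.+1%:Z |` G) \in Bcx (2 * k0).+3 k0.+1 m.+2.
  rewrite BcxS //; last by rewrite -(half_odd k0.+1) mulnS.
  by rewrite in_fsetU mem_joinv.
have A3 : m.+3%:Z |` (m.+2%:Z |` (m.+1%:Z |` G)) \in Bcx (2 * k0).+4 k0.+1 m.+3.
  rewrite BcxS //; last by rewrite /= mul2n doubleK.
  by rewrite in_fsetU mem_joinv.
have -> : (2 * k0.+2)%N = (2 * k0).+4 by lia.
have -> : (k0.+2 - 1)%N = k0.+1 by lia.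
rewrite en.
suff -> : G `|` [fset (m.+3 - 2)%:Z; (m.+3 - 1)%:Z; m.+3%:Z] =
   m.+3%:Z |` (m.+2%:Z |` (m.+1%:Z |` G)) by [].
have -> : (m.+3 - 2)%N = m.+1 by lia.
have -> : (m.+3 - 1)%N = m.+2 by lia.
apply/fsetP => w; rewrite !inE.
by case: (w \in G) (w == m.+1%:Z) (w == m.+2%:Z) (w == m.+3%:Z) => [] [] [] [].
Qed.
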